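(* Let $A:X\to Y$ be a bounded linear operator between Banach spaces, $1<p<\infty$, $C,\sigma>0$, and $G\subset B_Y$ with $\overline{\mathrm{co}}(G)=B_Y$. Suppose that for every $y\in G$ and every weakly null net $(x_\lambda)\subset\sigma B_X$, $\limsup_\lambda\|y+Ax_\lambda\|\le 1+C\sigma^p$. Then $\rho(\sigma,A)\le C\sigma^p$.
   Context: $\rho(\sigma,A)=\sup\{\limsup_\lambda\|y+Ax_\lambda\|-1 : y\in B_Y,\ (x_\lambda)\text{ a weakly null net in }\sigma B_X\}$. *)

(* Defs.v *)
From Stdlib Require Import Reals List.
Open Scope R_scope.
Set Implicit Arguments.

Record BanachSpace := {
  carrier :> Type;
  vzero : carrier;
  vadd : carrier -> carrier -> carrier;
  vopp : carrier -> carrier;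
  vscal : R -> carrier -> carrier;
  vnorm : carrier -> R;
  vadd_assoc : forall x y z, vadd x (vadd y z) = vadd (vadd x y) z;
  vadd_comm : forall x y, vadd x y = vadd y x;
  vadd_0 : forall x, vadd x vzero = x;
  vadd_opp : forall x, vadd x (vopp x) = vzero;
  vscal_1 : forall x, vscal 1 x = x;
  vscal_assoc : forall a b x, vscal a (vscal b x) = vscal (a * b) x;
  vscal_distr_l : forall a x y, vscal a (vadd x y) = vadd (vscal a x) (vscal a y);
  vscal_distr_r : forall a b x, vscal (a + b) x = vadd (vscal a x) (vscal b x);
  vnorm_eq0 : forall x, vnorm x = 0 -> x = vzero;
  vnorm_scal : forall a x, vnorm (vscal a x) = Rabs a * vnorm x;
  vnorm_triangle : forall x y, vnorm (vadd x y) <= vnorm x + vnorm y;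
  vcomplete : forall u : nat -> carrier,
    (forall eps, eps > 0 -> exists N, forall m n, (N <= m)%nat -> (N <= n)%nat ->
        vnorm (vadd (u m) (vopp (u n))) < eps) ->
    exists l, forall eps, eps > 0 -> exists N, forall n, (N <= n)%nat ->
        vnorm (vadd (u n) (vopp l)) < eps
}.

Arguments vzero {b0}.
Arguments vadd {b0}.
Arguments vopp {b0}.
Arguments vscal {b0}.
Arguments vnorm {b0}.

Definition bounded_linear (X Y : BanachSpace) (A : X -> Y) : Prop :=
  (forall x y, A (vadd x y) = vadd (A x) (A y)) /\
  (forall a x, A (vscal a x) = vscal a (A x)) /\
  (exists M, forall x, vnorm (A x) <= M * vnorm x).

Definition dual_elem (X : BanachSpace) (f : X -> R) : Prop :=
  (forall x y, f (vadd x y) = f x + f y) /\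
  (forall a x, f (vscal a x) = a * f x) /\
  (exists M, forall x, Rabs (f x) <= M * vnorm x).

Arguments dual_elem {X}.
Arguments bounded_linear {X Y}.

Record directed (I : Type) (le : I -> I -> Prop) : Prop := {
  dir_refl : forall i, le i i;
  dir_trans : forall i j k, le i j -> le j k -> le i k;
  dir_upper : forall i j, exists k, le i k /\ le j k;
  dir_inhabited : inhabited I
}.

Definition weakly_null (X : BanachSpace) (I : Type) (le : I -> I -> Prop) (x : I -> X) : Prop :=
  forall f : X -> R, dual_elem f ->
    forall eps, eps > 0 -> exists i0, forall i, le i0 i -> Rabs (f (x i)) < eps.

Arguments weakly_null {X I}.

Definition limsup_le (I : Type) (le : I -> I -> Prop) (a : I -> R) (c : R) : Prop :=
  forall eps, eps > 0 -> exists i0, forall i, le i0 i -> a i <= c + eps.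

Arguments limsup_le {I}.
Arguments directed {I}.

Definition convex_hull (Y : BanachSpace) (S : Y -> Prop) (y : Y) : Prop :=
  exists l : list (R * Y),
    Forall (fun q => 0 <= fst q /\ S (snd q)) l /\
    fold_right (fun q s => fst q + s) 0 l = 1 /\
    y = fold_right (fun q v => vadd (vscal (fst q) (snd q)) v) vzero l.

Arguments convex_hull {Y}.

Definition norm_closure (Y : BanachSpace) (S : Y -> Prop) (y : Y) : Prop :=
  forall eps, eps > 0 -> exists z, S z /\ vnorm (vadd y (vopp z)) < eps.

Arguments norm_closure {Y}.

Definition closed_convex_hull (Y : BanachSpace) (S : Y -> Prop) : Y -> Prop :=
  norm_closure (convex_hull S).

Arguments closed_convex_hull {Y}.

(** rho(sigma, A) <= r, where
    rho(sigma,A) = sup { limsup_i ||y + A x_i|| - 1 : y in B_Y,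
                          (x_i) weakly null net in sigma B_X }.
    (sup <= r iff every element is <= r.) *)
Definition rho_le (X Y : BanachSpace) (sigma : R) (A : X -> Y) (r : R) : Prop :=
  forall y : Y, vnorm y <= 1 ->
  forall (I : Type) (le : I -> I -> Prop) (x : I -> X),
    directed le -> weakly_null le x -> (forall i, vnorm (x i) <= sigma) ->
    limsup_le le (fun i => vnorm (vadd y (A (x i))) - 1) r.

Arguments rho_le {X Y}.

(* Main.v *)
Require Import Defs.
From Stdlib Require Import Reals Lra List.
Open Scope R_scope.

Lemma vscal0 (Y : BanachSpace) (v : Y) : vscal 0 v = vzero.
Proof. apply vnorm_eq0. rewrite vnorm_scal, Rabs_R0. ring. Qed.

Lemma vnorm0 (Y : BanachSpace) : vnorm (@vzero Y) = 0.
Proof. rewrite <- (@vscal0 Y vzero), vnorm_scal, Rabs_R0. ring. Qed.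

Lemma list_bound (Y : BanachSpace) (I : Type) (le : I -> I -> Prop) (a : I -> Y)
  (G : Y -> Prop) (c : R) : directed le ->
  (forall g, G g -> exists i0, forall i, le i0 i -> vnorm (vadd g (a i)) <= c) ->
  forall l : list (R * Y), Forall (fun q => 0 <= fst q /\ G (snd q)) l ->
  exists i0, forall i, le i0 i ->
    vnorm (vadd (fold_right (fun q v => vadd (vscal (fst q) (snd q)) v) vzero l)
                (vscal (fold_right (fun q s => fst q + s) 0 l) (a i)))
    <= fold_right (fun q s => fst q + s) 0 l * c.
Proof.
  intros Hd HG l. induction l as [|[t g] l IH]; intros HF; simpl.
  - destruct (dir_inhabited Hd) as [i0]. exists i0. intros i _.
    rewrite vscal0, vadd_0, vnorm0. lra.
  - inversion HF as [|? ? [Ht Hg] HF']; subst. simpl in *.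
    destruct (IH HF') as [i1 H1]. destruct (HG g Hg) as [i2 H2].
    destruct (dir_upper Hd i1 i2) as [k [Hk1 Hk2]]. exists k. intros i Hi.
    set (z := fold_right (fun q v => vadd (vscal (fst q) (snd q)) v) vzero l) in *.
    set (S := fold_right (fun q s => fst q + s) 0 l) in *.
    assert (E : vadd (vadd (vscal t g) z) (vscal (t + S) (a i)) =
                vadd (vscal t (vadd g (a i))) (vadd z (vscal S (a i)))).
    { rewrite vscal_distr_r, vscal_distr_l.
      rewrite <- !vadd_assoc. f_equal.
      rewrite (@vadd_comm Y z), <- vadd_assoc. f_equal. apply vadd_comm. }
    rewrite E.
    eapply Rle_trans; [apply vnorm_triangle|].
    rewrite vnorm_scal, Rabs_pos_eq by lra.
    specialize (H1 i (dir_trans Hd _ _ _ Hk1 Hi)).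
    specialize (H2 i (dir_trans Hd _ _ _ Hk2 Hi)).
    assert (t * vnorm (vadd g (a i)) <= t * c) by (apply Rmult_le_compat_l; lra).
    lra.
Qed.

Theorem proposition2p2 (X Y : BanachSpace) (A : X -> Y) (p C sigma : R) (G : Y -> Prop) :
  bounded_linear A ->
  1 < p -> C > 0 -> sigma > 0 ->
  (forall y, G y -> vnorm y <= 1) ->
  (forall y, closed_convex_hull G y <-> vnorm y <= 1) ->
  (forall y, G y ->
     forall (I : Type) (le : I -> I -> Prop) (x : I -> X),
       directed le -> weakly_null le x -> (forall i, vnorm (x i) <= sigma) ->
       limsup_le le (fun i => vnorm (vadd y (A (x i)))) (1 + C * Rpower sigma p)) ->
  rho_le sigma A (C * Rpower sigma p).
Proof.
  intros _ _ _ _ _ Hcl HG y Hy I le x Hd Hw Hx eps Heps.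
  set (r := C * Rpower sigma p) in *.
  destruct (proj2 (Hcl y) Hy (eps/2) ltac:(lra)) as [z [[l [HF [Hs Hz]]] Hyz]].
  destruct (@list_bound Y I le (fun i => A (x i)) G (1 + r + eps/2) Hd) with (l := l)
    as [i0 H0].
  - intros g Hg. destruct (HG g Hg I le x Hd Hw Hx (eps/2) ltac:(lra)) as [i0 H0].
    exists i0. exact H0.
  - exact HF.
  - exists i0. intros i Hi. specialize (H0 i Hi).
    rewrite Hs, vscal_1, <- Hz in H0.
    assert (E : vadd y (A (x i)) = vadd (vadd y (vopp z)) (vadd z (A (x i)))).
    { rewrite vadd_assoc, <- (@vadd_assoc Y y (vopp z) z), (@vadd_comm Y (vopp z) z),
        vadd_opp, vadd_0. reflexivity. }
    rewrite E. pose proof (@vnorm_triangle Y (vadd y (vopp z)) (vadd z (A (x i)))).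
    lra.
Qed.
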